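(* Let $T$ be a forest, $A\in\mathcal R(T)$ and $c\ge1$. If $T_1,\dots,T_c$ are mutually independent subtrees of $T$ and $A[T_i]$ is invertible for each $i\in[c]$, then $$\mathrm{nullity}(A)\le P\bigl(T\setminus(T_1\cup\dots\cup T_c)\bigr).$$
   Context: For a forest $T$ with vertices identified with $\{1,\dots,n\}$, $\mathcal R(T)$ is the set of real $n\times n$ matrices $A=(a_{ij})$ with $a_{ij}\ne0$ iff $\{i,j\}\in E(T)$ for $i\neq j$, and $a_{ij}a_{ji}>0$ on every edge; diagonal entries arbitrary. $A[T_i]$ is the principal submatrix indexed by $V(T_i)$. Two subtrees $T_1,T_2$ of $T$ are independent if no edge of $T$ joins a vertex of $T_1$ to a vertex of $T_2$. A path cover of a graph $G$ is a set of vertex-disjoint induced paths whose vertex sets cover $V(G)$; $P(G)$, the path cover number, is the minimum number of paths in a path cover. $T\setminus(T_1\cup\dots\cup T_c)$ is the induced subgraph on the remaining vertices. *)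

(* Defs.v *)
From mathcomp Require Import all_boot all_order all_algebra.
Set Implicit Arguments. Unset Strict Implicit. Unset Printing Implicit Defensive.
Import Order.TTheory GRing.Theory Num.Theory.
Local Open Scope ring_scope.

Definition is_forest (n : nat) (e : rel 'I_n) : Prop :=
  [/\ symmetric e, irreflexive e &
      ~ (exists s : seq 'I_n, [/\ uniq s, (3 <= size s)%N & cycle e s])].

Definition induced_rel (n : nat) (e : rel 'I_n) (X : {set 'I_n}) : rel 'I_n :=
  fun u v => [&& e u v, u \in X & v \in X].

Definition is_subtree (n : nat) (e : rel 'I_n) (X : {set 'I_n}) : Prop :=
  X != set0 /\ {in X &, forall x y, connect (induced_rel e X) x y}.

Definition independent (n : nat) (e : rel 'I_n) (X Y : {set 'I_n}) : Prop :=
  forall x y, x \in X -> y \in Y -> ~~ e x y.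

Definition induces_path (n : nat) (e : rel 'I_n) (X : {set 'I_n}) : bool :=
  [exists t : (#|X|).-tuple 'I_n,
    [&& uniq t, X == [set x in t] &
        [forall x in X, forall y in X,
          e x y == ((index y t == (index x t).+1) || (index x t == (index y t).+1))]]].

Definition is_path_cover (n : nat) (e : rel 'I_n) (S : {set 'I_n})
    (Q : {set {set 'I_n}}) : bool :=
  partition Q S && [forall B in Q, induces_path e B].

(* path cover number: minimum size of a path cover (#|S| is always attained
   by the cover by singletons, so it serves as the default of the min;
   for S empty this gives 0) *)
Definition path_cover_number (n : nat) (e : rel 'I_n) (S : {set 'I_n}) : nat :=
  \big[minn/#|S|]_(Q : {set {set 'I_n}} | is_path_cover e S Q) #|Q|.

Definition principal_submx (R : Type) (n : nat) (A : 'M[R]_n) (X : {set 'I_n})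
  : 'M[R]_(#|X|) :=
  \matrix_(i < #|X|, j < #|X|) A (enum_val i) (enum_val j).

Definition in_RT (R : realFieldType) (n : nat) (e : rel 'I_n) (A : 'M[R]_n) : Prop :=
  (forall i j, i != j -> (A i j != 0) = e i j) /\
  (forall i j, e i j -> 0 < A i j * A j i).

Definition nullity (R : fieldType) (n : nat) (A : 'M[R]_n) : nat := (n - \rank A)%N.

(* Main.v *)
Require Import Defs.
From mathcomp Require Import all_boot all_order all_algebra.
From mathcomp Require Import zify ring.
Import GRing.Theory Num.Theory.
Local Open Scope ring_scope.
Set Implicit Arguments. Unset Strict Implicit. Unset Printing Implicit Defensive.

Section Leaf.
Variables (n : nat) (e : rel 'I_n).
Hypotheses (esym : symmetric e) (eirr : irreflexive e)
  (nocyc : ~ (exists s : seq 'I_n, [/\ uniq s, (3 <= size s)%N & cycle e s])).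

Lemma no_back x p a : uniq (x :: p) -> path e x p -> a \in p -> a != head x p -> e x a -> False.
Proof.
move=> U P ap ah exa; case/splitPr: ap U P ah => p1 p2 U P ah.
apply: nocyc; exists (x :: rcons p1 a); split.
- have -> : x :: rcons p1 a = take (size p1).+2 (x :: p1 ++ a :: p2).
    by rewrite /= take_cat ltnNge leqnSn /= subSnn /= -cats1 take0.
  exact: take_uniq.
- case: p1 {U P} ah => [|y p1] /=; first by rewrite eqxx.
  by rewrite size_rcons.
- rewrite /= rcons_path last_rcons (esym a x) exa andbT.
  by move: P; rewrite cat_path -cats1 cat_path /= => /andP[-> /andP[-> _]].
Qed.

Lemma size_uniq_le (s : seq 'I_n) : uniq s -> (size s <= n)%N.
Proof. by move=> U; rewrite -(card_uniqP U); apply: leq_trans (max_card _) _; rewrite card_ord. Qed.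

Definition leafin (V : {set 'I_n}) t :=
  forall a b, a \in V -> b \in V -> e t a -> e t b -> a = b.

Lemma leaf_step (V : {set 'I_n}) x p : uniq (x :: p) -> path e x p ->
  leafin V x \/ exists2 c, c \in V & e x c && (c \notin x :: p).
Proof.
move=> U P.
case: (boolP [exists c in V, e x c && (c \notin x :: p)]).
  by case/exists_inP=> c cV H; right; exists c.
rewrite negb_exists_in => /forall_inP H; left=> a b aV bV xa xb.
have ain : a \in x :: p by move: (H a aV); rewrite xa /= negbK.
have bin : b \in x :: p by move: (H b bV); rewrite xb /= negbK.
have ax : a != x by apply: contraTneq xa => ->; rewrite eirr.
have bx : b != x by apply: contraTneq xb => ->; rewrite eirr.
move: ain bin; rewrite !inE (negbTE ax) (negbTE bx) /= => ap bp.
apply/eqP; apply/negPn/negP => ab.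
case: (eqVneq a (head x p)) => ah.
- have bh : b != head x p by rewrite -ah eq_sym.
  by case: (no_back U P bp bh xb).
- by case: (no_back U P ap ah xa).
Qed.

Lemma leaf_exists (V : {set 'I_n}) : V != set0 -> exists2 t, t \in V & leafin V t.
Proof.
case/set0Pn=> x0 x0V.
suff: forall k x p, (n - size (x :: p) <= k)%N -> x \in V -> all (mem V) p ->
   uniq (x :: p) -> path e x p -> exists2 t, t \in V & leafin V t.
  by move/(_ n x0 [::]); apply=> //; rewrite leq_subr.
elim=> [|k IH] x p H xV pV U P; case: (leaf_step V U P) => [L|[c cV /andP[xc cp]]];
  try by exists x.
- have U' : uniq (c :: x :: p) by rewrite cons_uniq cp U.
  by move: (size_uniq_le U') H => /=; lia.
- apply: (IH c (x :: p)) => //=.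
  + by move: H => /=; lia.
  + by rewrite xV.
  + by rewrite cp; move: U => /= ->. 
  + by rewrite (esym c x) xc P.
Qed.
End Leaf.


Section Core.
Variables (R : fieldType) (n : nat) (e : rel 'I_n).
Hypotheses (esym : symmetric e) (eirr : irreflexive e).

Definition pat (M : 'M[R]_n) := forall i j, i != j -> (M i j != 0) = e i j.
Definition inK (V : {set 'I_n}) (M : 'M[R]_n) (x : 'rV[R]_n) :=
  (forall i, i \notin V -> x 0 i = 0) /\ (forall v, v \in V -> (x *m M) 0 v = 0).
Definition invU (U : {set 'I_n}) (M : 'M[R]_n) := forall x, inK U M x -> x = 0.
Definition ev (t : 'I_n) : 'rV[R]_n := delta_mx 0 t.
Definition Nb (V : {set 'I_n}) t s := forall j, j \in V -> j != t -> e t j -> j = s.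

Lemma sum_one (F : 'I_n -> R) a : (forall j, j != a -> F j = 0) -> \sum_j F j = F a.
Proof. by move=> H; rewrite (bigD1 a) //= big1 ?addr0 // => j /H. Qed.

Lemma sum_two (F : 'I_n -> R) a b : a != b ->
  (forall j, j != a -> j != b -> F j = 0) -> \sum_j F j = F a + F b.
Proof.
move=> ab H; rewrite (bigD1 a) //= (bigD1 b) 1?eq_sym //= big1 ?addr0 //.
by move=> j /andP[ja jb]; apply: H.
Qed.

Lemma mulE (x : 'rV[R]_n) (M : 'M[R]_n) v : (x *m M) 0 v = \sum_j x 0 j * M j v.
Proof. by rewrite mxE. Qed.

Lemma evE t j : ev t 0 j = (j == t)%:R.
Proof. by rewrite mxE eqxx. Qed.

Lemma mul_evD (x : 'rV[R]_n) c t (M : 'M[R]_n) v : ((x + c *: ev t) *m M) 0 v = (x *m M) 0 v + c * M t v.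
Proof.
rewrite mulmxDl -scalemxAl !mxE; congr (_ + _); congr (_ * _).
by rewrite (sum_one (a := t)) ?evE ?eqxx ?mul1r // => j jt; rewrite evE (negbTE jt) mul0r.
Qed.

Lemma evDE (x : 'rV[R]_n) c t j : (x + c *: ev t) 0 j = x 0 j + c * (j == t)%:R.
Proof. by rewrite !mxE eqxx. Qed.

Section Pat.
Variable M : 'M[R]_n.
Hypothesis pM : pat M.

Lemma pat0 i j : i != j -> ~~ e i j -> M i j = 0.
Proof. by move=> ij; rewrite -pM // => /negPn/eqP. Qed.

Lemma patN i j : e i j -> M i j != 0.
Proof. by move=> eij; rewrite pM // ; apply: contraTneq eij => ->; rewrite eirr. Qed.

Lemma eq_at_t (V : {set 'I_n}) (x : 'rV[R]_n) t s : t \in V -> s != t -> Nb V t s -> (forall i, i \notin V -> x 0 i = 0) ->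
  (x *m M) 0 t = x 0 t * M t t + x 0 s * M s t.
Proof.
move=> tV st N sup; rewrite mulE (sum_two (a := t) (b := s)) 1?eq_sym //.
move=> j jt js; case: (boolP (j \in V)) => jV; last by rewrite sup // mul0r.
rewrite (pat0 jt) ?mulr0 //; rewrite esym; apply/negP => etj.
by move: js; rewrite (N j jV jt etj) eqxx.
Qed.

Lemma Mt0 (V : {set 'I_n}) t s v : v \in V -> v != t -> v != s -> Nb V t s -> M t v = 0.
Proof.
move=> vV vt vs N; apply: pat0; first by rewrite eq_sym.
by apply/negP => etv; move: vs; rewrite (N v vV vt etv) eqxx.
Qed.

Definition schur t s := M - (M s t * M t s / M t t) *: delta_mx s s.

Lemma schurE t s i j : schur t s i j = M i j - (M s t * M t s / M t t) * ((i == s) && (j == s))%:R.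
Proof. by rewrite !mxE. Qed.

Lemma schur_pat t s : pat (schur t s).
Proof.
move=> i j ij; rewrite schurE -pM //.
case: (eqVneq i s) => [eis|]; last by rewrite andFb mulr0 subr0.
by move: ij; rewrite eis => /negbTE; rewrite eq_sym => ->; rewrite andbF mulr0 subr0.
Qed.

Lemma mul_schur (y : 'rV[R]_n) t s v :
  (y *m schur t s) 0 v = (y *m M) 0 v - (M s t * M t s / M t t) * (y 0 s * (v == s)%:R).
Proof.
rewrite !mulE.
rewrite (eq_bigr (fun j => y 0 j * M j v - y 0 j * ((M s t * M t s / M t t) * ((j == s) && (v == s))%:R))); last first.
  by move=> j _; rewrite schurE mulrBr.
rewrite sumrB; congr (_ - _).
rewrite (sum_one (a := s)); first by rewrite eqxx /=; ring.
by move=> j /negbTE ->; rewrite /= mulr0 mulr0.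
Qed.

Lemma inK_sub (V V' : {set 'I_n}) x : inK V M x -> V' \subset V ->
  (forall i, i \in V -> i \notin V' -> x 0 i = 0) -> inK V' M x.
Proof.
move=> [sup eqs] sub H; split; last by move=> v vV'; apply: eqs; apply: (subsetP sub).
by move=> i iV'; case: (boolP (i \in V)) => iV; [apply: H | apply: sup].
Qed.

Lemma R1_fwd (V : {set 'I_n}) x t s : t \in V -> s != t -> Nb V t s -> M t t != 0 -> inK V M x ->
  inK (V :\ t) (schur t s) (x + (- x 0 t) *: ev t) /\ x 0 t = - (x 0 s * M s t) / M t t.
Proof.
move=> tV st N Mtt [sup eqs].
have Et : x 0 t = - (x 0 s * M s t) / M t t.
  have := eqs t tV; rewrite (eq_at_t tV st N sup) => H.
  transitivity ((x 0 t * M t t + x 0 s * M s t - x 0 s * M s t) / M t t); first by field.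
  by rewrite H sub0r.
split=> //; split.
  move=> i; rewrite evDE in_setD1 negb_and negbK => /orP[/eqP->|iV].
    by rewrite eqxx mulr1 addrN.
  have it : i != t by apply: contraNneq iV => ->.
  rewrite (negbTE it).
  by rewrite sup // mulr0 addr0.
move=> v; rewrite in_setD1 => /andP[vt vV].
rewrite mul_schur mul_evD eqs // add0r evDE (negbTE st) mulr0 addr0.
case: (eqVneq v s) => [->|vs].
  by rewrite Et /= mulr1; field.
by rewrite (Mt0 vV vt vs N) /= !mulr0 subr0.
Qed.

Lemma R1_bwd (U : {set 'I_n}) y t s : t \in U -> s != t -> Nb U t s -> M t t != 0 ->
  inK (U :\ t) (schur t s) y -> inK U M (y + (- (y 0 s * M s t) / M t t) *: ev t).
Proof.
move=> tU st N Mtt [sup eqs].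
have supx : forall i, i \notin U -> (y + (- (y 0 s * M s t) / M t t) *: ev t) 0 i = 0.
  move=> i iU; have it : i != t by apply: contraNneq iU => ->.
  by rewrite evDE (negbTE it) mulr0 addr0 sup // in_setD1 negb_and iU orbT.
have yt : y 0 t = 0 by rewrite sup // in_setD1 eqxx.
split=> // v vU.
case: (eqVneq v t) => [->|vt].
  rewrite (eq_at_t tU st N supx) !evDE eqxx (negbTE st) yt add0r mulr1 mulr0 addr0.
  by field.
have vU' : v \in U :\ t by rewrite in_setD1 vt.
have := eqs v vU'; rewrite mul_schur mul_evD => H.
case: (eqVneq v s) => [evs|vs].
  move: H; rewrite evs eqxx mulr1 => /eqP; rewrite subr_eq0 => /eqP ->.
  by field.
by move: H; rewrite (negbTE vs) !mulr0 subr0 => ->; rewrite (Mt0 vU vt vs N) mulr0 addr0.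
Qed.

Lemma R2_fwd (V : {set 'I_n}) x t s : t \in V -> s != t -> Nb V t s -> e t s -> M t t = 0 ->
  inK V M x -> x 0 s = 0 /\ inK (V :\: [set t; s]) M (x + (- x 0 t) *: ev t).
Proof.
move=> tV st N ets Mtt [sup eqs].
have xs : x 0 s = 0.
  have := eqs t tV; rewrite (eq_at_t tV st N sup) Mtt mulr0 add0r => /eqP.
  have Mst : M s t != 0 by apply: patN; rewrite esym.
  by rewrite mulf_eq0 (negbTE Mst) orbF => /eqP.
split=> //; split.
  move=> i; rewrite evDE in_setD in_set2 negb_and negbK.
  case: (eqVneq i t) => [->|it]; first by rewrite mulr1 addrN.
  rewrite mulr0 addr0 /=; case/orP => [/eqP->|]; first exact: xs.
  exact: sup.
move=> v; rewrite in_setD in_set2 negb_or => /andP[/andP[vt vs] vV].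
by rewrite mul_evD eqs // (Mt0 vV vt vs N) mulr0 addr0.
Qed.

Lemma R2_bwd (U : {set 'I_n}) y t s : t \in U -> s \in U -> s != t -> Nb U t s -> e t s ->
  M t t = 0 -> inK (U :\: [set t; s]) M y -> inK U M (y + (- (y *m M) 0 s / M t s) *: ev t).
Proof.
move=> tU sU st N ets Mtt [sup eqs].
have Mts : M t s != 0 by apply: patN.
have supx : forall i, i \notin U -> (y + (- (y *m M) 0 s / M t s) *: ev t) 0 i = 0.
  move=> i iU; have it : i != t by apply: contraNneq iU => ->.
  by rewrite evDE (negbTE it) mulr0 addr0 sup // in_setD negb_and iU orbT.
have ys : y 0 s = 0 by rewrite sup // in_setD in_set2 eqxx orbT.
split=> // v vU.
case: (eqVneq v t) => [->|vt].
  by rewrite (eq_at_t tU st N supx) !evDE (negbTE st) ys Mtt !mulr0 !add0r mul0r.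
rewrite mul_evD; case: (eqVneq v s) => [->|vs]; first by field.
by rewrite eqs ?(Mt0 vU vt vs N) ?mulr0 ?addr0 // in_setD in_set2 negb_or vt vs.
Qed.

Lemma eq_at_t0 (V : {set 'I_n}) (x : 'rV[R]_n) t : t \in V ->
  (forall j, j \in V -> j != t -> ~~ e t j) -> (forall i, i \notin V -> x 0 i = 0) ->
  (x *m M) 0 t = x 0 t * M t t.
Proof.
move=> tV N sup; rewrite mulE (sum_one (a := t)) // => j jt.
case: (boolP (j \in V)) => jV; last by rewrite sup // mul0r.
by rewrite (pat0 jt) ?mulr0 // esym N.
Qed.

Lemma R0_bwd (U : {set 'I_n}) y t : t \in U -> (forall j, j \in U -> j != t -> ~~ e t j) ->
  inK (U :\ t) M y -> inK U M y.
Proof.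
move=> tU N [sup eqs].
have supx : forall i, i \notin U -> y 0 i = 0.
  by move=> i iU; rewrite sup // in_setD1 negb_and iU orbT.
split=> // v vU; case: (eqVneq v t) => [->|vt]; last by rewrite eqs // in_setD1 vt.
by rewrite (eq_at_t0 tU N supx) sup ?mul0r // in_setD1 eqxx.
Qed.

End Pat.

Lemma invU_ext (U : {set 'I_n}) (M M' : 'M[R]_n) :
  (forall i j, i \in U -> j \in U -> M i j = M' i j) -> invU U M -> invU U M'.
Proof.
move=> H iU x [sup eqs]; apply: iU; split=> // v vU.
rewrite -(eqs v vU) !mulE; apply: eq_bigr => j _.
by case: (boolP (j \in U)) => jU; [rewrite H | rewrite sup // !mul0r].
Qed.

Lemma row0P (x : 'rV[R]_n) : (forall i, x 0 i = 0) -> x = 0.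
Proof. by move=> H; apply/rowP => i; rewrite H mxE. Qed.

Lemma ev_cancel (y : 'rV[R]_n) c t : y + c *: ev t = 0 -> y 0 t = 0 -> y = 0.
Proof.
move=> H yt; apply: row0P => i; case: (eqVneq i t) => [->//|it].
by move: (congr1 (fun z : 'rV[R]_n => z 0 i) H); rewrite evDE (negbTE it) mulr0 addr0 mxE.
Qed.

Lemma shift_back (x : 'rV[R]_n) t : x = (x + (- x 0 t) *: ev t) + x 0 t *: ev t.
Proof. by rewrite -addrA -scalerDl addNr scale0r addr0. Qed.

Lemma shift_Z (x : 'rV[R]_n) t (Z : {set 'I_n}) : (forall z, z \in Z -> x 0 z = 0) ->
  forall z, z \in Z -> (x + (- x 0 t) *: ev t) 0 z = 0.
Proof.
move=> H z zZ; rewrite evDE; case: (eqVneq z t) => [->|zt]; first by rewrite mulr1 addrN.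
by rewrite mulr0 addr0 H.
Qed.

Lemma shift_at (x : 'rV[R]_n) t j : j != t -> (x + (- x 0 t) *: ev t) 0 j = x 0 j.
Proof. by move=> jt; rewrite evDE (negbTE jt) mulr0 addr0. Qed.

Lemma emptyG (V U : {set 'I_n}) (M : 'M[R]_n) (F : {set {set 'I_n}}) : V = set0 ->
  (forall f, f \in F -> exists u v, [/\ f = [set u; v], e u v, u \in V :\: U & v \in V :\: U]) ->
  exists Z : {set 'I_n}, (#|Z| + #|F| <= #|V :\: U|)%N /\
     forall x, inK V M x -> (forall z, z \in Z -> x 0 z = 0) -> x = 0.
Proof.
move=> V0 hF; exists set0; split.
  have -> : F = set0.
    apply/setP => f; rewrite in_set0; apply/negbTE/negP => fF.
    by case: (hF f fF) => u [v [_ _ uV _]]; move: uV; rewrite V0 in_setD in_set0 andbF.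
  by rewrite !cards0.
by move=> x [sup _] _; apply: row0P => i; apply: sup; rewrite V0 in_set0.
Qed.

End Core.
Arguments ev {R n} t. Arguments evE {R n} t j.


Section Counting.
Variables (n : nat).


Lemma cnt1 (F : {set {set 'I_n}}) t s :
  (forall f, f \in F -> t \in f -> f = [set t; s]) ->
  (#|F| <= #|[set f in F | t \notin f]| + 1)%N.
Proof.
move=> H; rewrite -(cardsID [set f : {set 'I_n} | t \in f] F) addnC.
have -> : F :\: [set f : {set 'I_n} | t \in f] = [set f in F | t \notin f].
  by apply/setP => f; rewrite !inE andbC.
rewrite leq_add2l -(cards1 [set t; s]); apply: subset_leq_card.
by apply/subsetP => f; rewrite !inE => /andP[fF tf]; rewrite (H f fF tf).
Qed.

Lemma cnt2 (F : {set {set 'I_n}}) t s :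
  (forall f, f \in F -> t \in f -> s \in f) -> (#|[set f in F | s \in f]| <= 2)%N ->
  (#|F| <= #|[set f in F | (t \notin f) && (s \notin f)]| + 2)%N.
Proof.
move=> H hs; rewrite -(cardsID [set f : {set 'I_n} | (t \in f) || (s \in f)] F) addnC.
have -> : F :\: [set f : {set 'I_n} | (t \in f) || (s \in f)] = [set f in F | (t \notin f) && (s \notin f)].
  by apply/setP => f; rewrite !inE negb_or andbC.
rewrite leq_add2l; apply: leq_trans hs; apply: subset_leq_card.
apply/subsetP => f; rewrite !inE => /andP[fF /orP[tf|->]]; last by rewrite fF.
by rewrite fF (H f fF tf).
Qed.

Lemma cardD1W (V U : {set 'I_n}) t : t \in V -> t \notin U ->
  #|V :\ t :\: U| = (#|V :\: U| - 1)%N /\ (1 <= #|V :\: U|)%N.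
Proof.
move=> tV tU; have tW : t \in V :\: U by rewrite in_setD tU tV.
have -> : V :\ t :\: U = (V :\: U) :\ t.
  by apply/setP => i; rewrite !inE; case: (i == t); rewrite ?andbF.
rewrite (cardsD1 t (V :\: U)) tW; split; first by rewrite /= addnC addnK.
by rewrite /= leq_addr.
Qed.

Lemma cardD2W (V U : {set 'I_n}) t s : t \in V -> t \notin U -> s \in V -> s \notin U -> s != t ->
  (#|V :\: [set t; s] :\: U| + 2 = #|V :\: U|)%N.
Proof.
move=> tV tU sV sU st.
have -> : V :\: [set t; s] :\: U = (V :\: U) :\ t :\ s.
  by apply/setP => i; rewrite !inE negb_or; case: (i == t); case: (i == s); rewrite ?andbF.
rewrite (cardsD1 t (V :\: U)) (cardsD1 s (V :\: U :\ t)) !inE st tU tV sU sV /=.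
by rewrite addnC addnA.
Qed.

Lemma ar2 (a b c d v : nat) : (b <= c + 2 -> d + 2 = v -> a + c <= d -> a + b <= v)%N.
Proof. lia. Qed.
Lemma ar1 (a b c d v : nat) : (b <= c + 1 -> d = v - 1 -> 1 <= v -> a + c <= d -> a + b <= v)%N.
Proof. lia. Qed.
Lemma ar3 (a b d v : nat) (c : bool) : (d = v - 1 -> 1 <= v -> a + b <= d -> (~~ c) + a + b <= v)%N.
Proof. case: c => /=; lia. Qed.
End Counting.

Section Main.
Variables (R : fieldType) (n : nat) (e : rel 'I_n).
Hypotheses (esym : symmetric e) (eirr : irreflexive e)
  (nocyc : ~ (exists s : seq 'I_n, [/\ uniq s, (3 <= size s)%N & cycle e s])).

Definition edgesIn (F : {set {set 'I_n}}) (W : {set 'I_n}) :=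
  forall f, f \in F -> exists u v, [/\ f = [set u; v], e u v, u \in W & v \in W].

Definition GoodZ (V U : {set 'I_n}) (M : 'M[R]_n) (F : {set {set 'I_n}}) :=
  exists Z : {set 'I_n}, (#|Z| + #|F| <= #|V :\: U|)%N /\
     forall x, inK V M x -> (forall z, z \in Z -> x 0 z = 0) -> x = 0.

Lemma edges_sub (F F' : {set {set 'I_n}}) (W W' : {set 'I_n}) :
  edgesIn F W -> F' \subset F ->
  (forall f u, f \in F' -> u \in f -> u \in W -> u \in W') -> edgesIn F' W'.
Proof.
move=> hF sub H f fF'; have fF := subsetP sub f fF'.
case: (hF f fF) => u [v [fE euv uW vW]]; exists u, v; split=> //.
  by apply: (H f) => //; rewrite fE !inE eqxx.
by apply: (H f) => //; rewrite fE !inE eqxx orbT.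
Qed.

Lemma deg_sub (F F' : {set {set 'I_n}}) : F' \subset F ->
  (forall x, #|[set f in F | x \in f]| <= 2)%N -> (forall x, #|[set f in F' | x \in f]| <= 2)%N.
Proof.
move=> sub H x; apply: leq_trans (H x); apply: subset_leq_card.
by apply/subsetP => f; rewrite !inE => /andP[/(subsetP sub) -> ->].
Qed.

Lemma mainG k : forall (V U : {set 'I_n}) (M : 'M[R]_n) (F : {set {set 'I_n}}),
  (#|V| <= k)%N -> U \subset V -> pat e M -> invU U M ->
  edgesIn F (V :\: U) -> (forall x, #|[set f in F | x \in f]| <= 2)%N ->
  GoodZ V U M F.
Proof.
elim: k => [|k IH] V U M F hV sub pM iU hF hdeg.
  rewrite /GoodZ; apply: (emptyG (e := e)) => //; apply/eqP; rewrite -cards_eq0 -leqn0.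
  exact: hV.
case: (eqVneq V set0) => [V0|Vn0]; first by rewrite /GoodZ; apply: (emptyG (e := e)).
have [t tV leaf] := leaf_exists esym eirr nocyc Vn0.
have hVt : (#|V :\ t| <= k)%N.
  by move: hV; rewrite (cardsD1 t V) tV add1n ltnS.
have NbV : forall s, s \in V -> e t s -> Nb e V t s.
  by move=> s sV ets j jV jt etj; apply: (leaf j s).
have sne : forall s, e t s -> s != t.
  by move=> s ets; apply: contraTneq ets => ->; rewrite eirr.
case: (boolP (t \in U)) => tU.
- have NbU : forall s, s \in V -> e t s -> Nb e U t s.
    by move=> s sV ets j jU; apply: (NbV s sV ets j (subsetP sub j jU)).
  have E1 : V :\ t :\: (U :\ t) = V :\: U.
    apply/setP => i; rewrite !inE; case: (eqVneq i t) => [->|] /=; last by [].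
    by rewrite tU.
  case: (boolP (M t t == 0)) => Mtt.
  + have [s sU ets] : exists2 s, s \in U & e t s.
      case: (boolP [exists s in U, e t s]) => [/exists_inP[s sU ets]|]; first by exists s.
      rewrite negb_exists_in => /forall_inP Hn.
      have : ev t = 0 :> 'rV[R]_n.
        apply: iU; split.
          by move=> i iU; rewrite evE; case: (eqVneq i t) => // it; move: iU; rewrite it tU.
        move=> v vU; rewrite -rowE mxE; case: (eqVneq v t) => [->|vt]; first exact/eqP.
        by apply: (pat0 pM); [rewrite eq_sym | apply: Hn].
      by move/(congr1 (fun z : 'rV[R]_n => z 0 t)); rewrite evE eqxx mxE => /eqP; rewrite oner_eq0.
    have sV := subsetP sub s sU.
    have st := sne s ets.
    have E2 : V :\: [set t; s] :\: (U :\: [set t; s]) = V :\: U.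
      apply/setP => i; rewrite !inE; case: (eqVneq i t) => [->|] /=; first by rewrite tU.
      by case: (eqVneq i s) => [->|] /=; first by rewrite sU.
    have [Z [cZ hZ]] : GoodZ (V :\: [set t; s]) (U :\: [set t; s]) M F.
      apply: IH.
    * apply: leq_trans hVt; apply: subset_leq_card; apply/subsetP => i.
      by rewrite !inE negb_or => /andP[/andP[-> _] ->].
    * exact: setSD.
    * exact: pM.
    * move=> y hy; have := R2_bwd esym eirr pM tU sU st (NbU s sV ets) ets (eqP Mtt) hy.
      move/iU/ev_cancel; apply; case: hy => sup _; apply: sup.
      by rewrite !inE eqxx.
    * by rewrite E2.
    * exact: hdeg.
    exists Z; split; first by rewrite -E2.
    move=> x hx hxZ.
    have [xs hy] := R2_fwd esym eirr pM tV st (NbV s sV ets) ets (eqP Mtt) hx.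
    have y0 := hZ _ hy (shift_Z t hxZ).
    have Mts : M t s != 0 by apply: (patN eirr pM).
    have xt : x 0 t = 0.
      have h := hx.2 s sV; rewrite (shift_back x t) y0 mul_evD mul0mx mxE add0r in h.
      by move/eqP: h; rewrite mulf_eq0 (negbTE Mts) orbF => /eqP.
    by rewrite (shift_back x t) y0 xt scale0r addr0.
  + case: (boolP [exists s in V, e t s]) => [/exists_inP[s sV ets]|].
    * have st := sne s ets.
      have [Z [cZ hZ]] : GoodZ (V :\ t) (U :\ t) (schur M t s) F.
        apply: IH.
      -- exact: hVt.
      -- exact: setSD.
      -- exact: schur_pat.
      -- move=> y hy; have := R1_bwd esym pM tU st (NbU s sV ets) Mtt hy.
         move/iU/ev_cancel; apply; case: hy => sup _; apply: sup.
         by rewrite !inE eqxx.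
      -- by rewrite E1.
      -- exact: hdeg.
      exists Z; split; first by rewrite -E1.
      move=> x hx hxZ.
      have [hy Et] := R1_fwd esym pM tV st (NbV s sV ets) Mtt hx.
      have y0 := hZ _ hy (shift_Z t hxZ).
      have xs : x 0 s = 0 by rewrite -(shift_at x st) y0 mxE.
      have xt : x 0 t = 0 by rewrite Et xs mul0r oppr0 mul0r.
      by rewrite (shift_back x t) y0 xt scale0r addr0.
    * rewrite negb_exists_in => /forall_inP Hn.
      have NoV : forall j, j \in V -> j != t -> ~~ e t j by move=> j jV _; apply: Hn.
      have [Z [cZ hZ]] : GoodZ (V :\ t) (U :\ t) M F.
        apply: IH.
      -- exact: hVt.
      -- exact: setSD.
      -- exact: pM.
      -- move=> y hy; apply: iU; apply: (R0_bwd esym pM tU) hy.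
         by move=> j jU jt; apply: NoV => //; apply: (subsetP sub).
      -- by rewrite E1.
      -- exact: hdeg.
      exists Z; split; first by rewrite -E1.
      move=> x hx hxZ; apply: hZ => //.
      have xt : x 0 t = 0.
        have := hx.2 t tV; rewrite (eq_at_t0 esym pM tV NoV hx.1).
        by move/eqP; rewrite mulf_eq0 (negbTE Mtt) orbF => /eqP.
      apply: (inK_sub hx); first exact: subsetDl.
      by move=> i iV; rewrite !inE iV andbT negbK => /eqP->.
- have tW : t \in V :\: U by rewrite in_setD tU tV.
  case: (boolP [exists f in F, t \in f]) => [/exists_inP[f0 f0F tf0]|].
  + have Hf : forall g, g \in F -> t \in g -> exists2 w, w \in V :\: U & e t w /\ g = [set t; w].
      move=> g gF tg; case: (hF g gF) => u [v [gE euv uW vW]].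
      move: tg; rewrite gE !inE => /orP[/eqP tu|/eqP tv].
        by exists v => //; split; [rewrite tu | rewrite tu].
      by exists u => //; split; [rewrite tv esym | rewrite tv setUC].
    have [s sW [ets f0E]] := Hf f0 f0F tf0.
    have sV : s \in V by move: sW; rewrite in_setD => /andP[].
    have sU : s \notin U by move: sW; rewrite in_setD => /andP[].
    have st := sne s ets.
    have Hts : forall g, g \in F -> t \in g -> g = [set t; s].
      move=> g gF tg; have [w wW [etw gE]] := Hf g gF tg.
      have wV : w \in V by move: wW; rewrite in_setD => /andP[].
      by rewrite gE (leaf w s).
    case: (boolP (M t t == 0)) => Mtt.
    * have cF := @cnt2 _ F t s (fun g gF tg => ltac:(by rewrite (Hts g gF tg) !inE eqxx orbT)) (hdeg s).
      have cV := cardD2W tV tU sV sU st.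
      have [Z [cZ hZ]] : GoodZ (V :\: [set t; s]) U M [set f in F | (t \notin f) && (s \notin f)].
        apply: IH.
        -- apply: leq_trans hVt; apply: subset_leq_card; apply/subsetP => i.
           by rewrite !inE negb_or => /andP[/andP[-> _] ->].
        -- apply/subsetP => i iU0; rewrite !inE (subsetP sub i iU0) andbT.
           by apply/norP; split; apply: contraTneq iU0 => ->.
        -- exact: pM.
        -- exact: iU.
        -- apply: (edges_sub hF); first by apply/subsetP => f; rewrite inE => /andP[].
           move=> f u; rewrite inE => /andP[_ /andP[tf sf]] uf; rewrite !inE => /andP[-> ->].
           rewrite andbT; apply/norP; split.
             by apply: contraNneq tf => <-.
           by apply: contraNneq sf => <-.
        -- apply: deg_sub hdeg; by apply/subsetP => f; rewrite inE => /andP[].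
      exists Z; split; first exact: (ar2 cF cV cZ).
      move=> x hx hxZ.
      have [xs hy] := R2_fwd esym eirr pM tV st (NbV s sV ets) ets (eqP Mtt) hx.
      have y0 := hZ _ hy (shift_Z t hxZ).
      have Mts : M t s != 0 by apply: (patN eirr pM).
      have xt : x 0 t = 0.
        have h := hx.2 s sV; rewrite (shift_back x t) y0 mul_evD mul0mx mxE add0r in h.
        by move/eqP: h; rewrite mulf_eq0 (negbTE Mts) orbF => /eqP.
      by rewrite (shift_back x t) y0 xt scale0r addr0.
    * have cF := @cnt1 _ F t s Hts.
      have [cV _] := cardD1W tV tU.
      have [Z [cZ hZ]] : GoodZ (V :\ t) U (schur M t s) [set f in F | t \notin f].
        apply: IH.
        -- exact: hVt.
        -- apply/subsetP => i iU0; rewrite !inE (subsetP sub i iU0) andbT.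
           by apply: contraTneq iU0 => ->.
        -- exact: schur_pat.
        -- apply: (invU_ext _ iU) => i j iU1 jU1; rewrite schurE.
           have -> : (i == s) = false by apply/negbTE; apply: contraTneq iU1 => ->.
           by rewrite andFb mulr0 subr0.
        -- apply: (edges_sub hF); first by apply/subsetP => f; rewrite inE => /andP[].
           move=> f u; rewrite inE => /andP[_ tf] uf; rewrite !inE => /andP[-> ->].
           by rewrite andbT; apply: contraNneq tf => <-.
        -- apply: deg_sub hdeg; by apply/subsetP => f; rewrite inE => /andP[].
      exists Z; split.
        have := cardD1W tV tU; case=> _ h1; exact: (ar1 cF cV h1 cZ).
      move=> x hx hxZ.
      have [hy Et] := R1_fwd esym pM tV st (NbV s sV ets) Mtt hx.
      have y0 := hZ _ hy (shift_Z t hxZ).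
      have xs : x 0 s = 0 by rewrite -(shift_at x st) y0 mxE.
      have xt : x 0 t = 0 by rewrite Et xs mul0r oppr0 mul0r.
      by rewrite (shift_back x t) y0 xt scale0r addr0.
  + rewrite negb_exists_in => /forall_inP Hn.
    have [cV c1] := cardD1W tV tU.
    have [Z [cZ hZ]] : GoodZ (V :\ t) U M F.
      apply: IH.
      * exact: hVt.
      * apply/subsetP => i iU0; rewrite !inE (subsetP sub i iU0) andbT.
        by apply: contraTneq iU0 => ->.
      * exact: pM.
      * exact: iU.
      * apply: (edges_sub hF) => // f u fF uf; rewrite !inE => /andP[-> ->].
        by rewrite andbT; apply: contraTneq uf => ->; apply: Hn.
      * exact: hdeg.
    exists (t |: Z); split.
      by rewrite cardsU1; apply: (ar3 _ cV c1 cZ).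
    move=> x hx hxZ; apply: hZ; last by move=> z zZ; apply: hxZ; rewrite !inE zZ orbT.
    apply: (inK_sub hx); first exact: subsetDl.
    move=> i iV; rewrite !inE iV andbT negbK => /eqP->.
    by apply: hxZ; rewrite !inE eqxx.
Qed.

End Main.


Section Final1.
Variables (R : fieldType) (n : nat).

Lemma nullity_le (A : 'M[R]_n) (Z : {set 'I_n}) :
  (forall x, inK setT A x -> (forall z, z \in Z -> x 0 z = 0) -> x = 0) ->
  (nullity A <= #|Z|)%N.
Proof.
move=> H; rewrite /nullity -mxrank_ker.
pose S : 'M[R]_(n, #|Z|) := \matrix_(i, j) (i == enum_val j)%:R.
have := mxrank_mul_ker (kermx A) S.
have -> : \rank (kermx A :&: kermx S)%MS = 0%N.
  apply/eqP; rewrite mxrank_eq0; apply/eqP/row_matrixP => i; rewrite row0.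
  set u := row i _.
  have uA : u *m A = 0.
    apply/sub_kermxP; apply: submx_trans (capmxSl _ (kermx S)); exact: row_sub.
  have uS : u *m S = 0.
    apply/sub_kermxP; apply: submx_trans (capmxSr (kermx A) _); exact: row_sub.
  apply: H.
    split=> [j|v _]; first by rewrite inE.
    by rewrite uA mxE.
  move=> z zZ.
  have h := congr1 (fun w : 'rV[R]_#|Z| => w 0 (enum_rank_in zZ z)) uS.
  have hs : (u *m S) 0 (enum_rank_in zZ z) = u 0 z.
    rewrite mxE (bigD1 z) //= big1 ?addr0.
      by rewrite /S !mxE enum_rankK_in // eqxx mulr1.
    by move=> j jz; rewrite /S !mxE enum_rankK_in // (negbTE jz) mulr0.
  by rewrite -hs h mxE.
by rewrite addn0 => <-; apply: rank_leq_col.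
Qed.


Lemma invU_union c (Ts : 'I_c -> {set 'I_n}) (e : rel 'I_n) (A : 'M[R]_n) : pat e A ->
  (forall i j, i != j -> independent e (Ts i) (Ts j)) ->
  (forall i, principal_submx A (Ts i) \in unitmx) -> invU (\bigcup_(i < c) Ts i) A.
Proof.
move=> pA ind unit x [sup eqs].
have blk : forall i j, j \in Ts i -> x 0 j = 0.
  move=> i j0 j0T; set X := Ts i.
  pose y : 'rV[R]_#|X| := \row_k x 0 (enum_val k).
  have yP : y *m principal_submx A X = 0.
    apply/rowP => k'; rewrite !mxE.
    set v := enum_val k'.
    have vX : v \in X := enum_valP k'.
    have vU : v \in \bigcup_(i < c) Ts i by apply/bigcupP; exists i.
    transitivity ((x *m A) 0 v); last exact: eqs v vU.
    rewrite mulE.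
    transitivity (\sum_(j in X) x 0 j * A j v).
      have XE : X = [set enum_val k | k : 'I_#|X| in [set: 'I_#|X|]].
        apply/setP => j; apply/idP/imsetP => [jX|[k _ ->]]; last exact: enum_valP.
        by exists (enum_rank_in jX j); rewrite ?inE ?enum_rankK_in.
      rewrite [in RHS]XE big_imset /=; last by move=> k1 k2 _ _; apply: enum_val_inj.
      by apply: eq_big => [k|k _]; rewrite ?inE // !mxE.
    symmetry; rewrite (bigID (mem X)) /= [X in _ + X]big1 ?addr0 //.
    move=> j jX; case: (boolP (j \in \bigcup_(i < c) Ts i)) => jU; last by rewrite sup // mul0r.
    case/bigcupP: jU => k _ jk.
    have ki : k != i by apply: (contraNneq _ jX) => ki; move: jk; rewrite ki.
    have jv : j != v by apply: (contraNneq _ jX) => ->.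
    by rewrite (pat0 pA jv (ind k i ki j v jk vX)) mulr0.
  have y0 : y = 0 by have := mulmxK (unit i) y; rewrite yP mul0mx.
  have := congr1 (fun w : 'rV[R]_#|X| => w 0 (enum_rank_in j0T j0)) y0.
  by rewrite !mxE enum_rankK_in.
apply: row0P => j; case: (boolP (j \in \bigcup_(i < c) Ts i)) => jU; last exact: sup.
by case/bigcupP: jU => i _ jT; apply: blk jT.
Qed.

End Final1.


Section Cover.
Variables (n : nat) (e : rel 'I_n).

Definition ipP (B : {set 'I_n}) (t : (#|B|).-tuple 'I_n) : bool :=
  [&& uniq t, B == [set x in t] &
      [forall x in B, forall y in B,
        e x y == ((index y t == (index x t).+1) || (index x t == (index y t).+1))]].

Definition tup (B : {set 'I_n}) : seq 'I_n :=
  if [pick t : (#|B|).-tuple 'I_n | ipP t] is Some t then val t else [::].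

Lemma tupP B : induces_path e B ->
  [/\ uniq (tup B), forall x, (x \in B) = (x \in tup B), size (tup B) = #|B| &
   forall x y, x \in B -> y \in B ->
     e x y = ((index y (tup B) == (index x (tup B)).+1) || (index x (tup B) == (index y (tup B)).+1))].
Proof.
move=> ip; rewrite /tup; case: pickP => [t /and3P[U /eqP BE /forall_inP H]|none]; last first.
  by case/existsP: ip => t; rewrite -/(ipP t) none.
split=> //; first by move=> x; rewrite {1}BE inE.
  by rewrite size_tuple.
by move=> x y xB yB; have /forall_inP/(_ y yB)/eqP := H x xB.
Qed.

Definition Fq (Q : {set {set 'I_n}}) : {set {set 'I_n}} :=
  [set f : {set 'I_n} | [exists B in Q, [exists u in B, [exists v in B, (f == [set u; v]) && e u v]]]].

Lemma Fq_edges Q W : partition Q W -> edgesIn e (Fq Q) W.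
Proof.
move=> pQ f; rewrite inE => /exists_inP[B BQ /exists_inP[u uB /exists_inP[v vB /andP[/eqP fE euv]]]].
have sub : forall z, z \in B -> z \in W.
  by move=> z zB; rewrite -(cover_partition pQ); apply/bigcupP; exists B.
by exists u, v; split=> //; apply: sub.
Qed.


Lemma Fq_mem Q f x : trivIset Q -> f \in Fq Q -> x \in f ->
  exists y, [/\ pblock Q x \in Q, x \in pblock Q x, y \in pblock Q x, e x y \/ e y x & f = [set x; y]].
Proof.
move=> tQ; rewrite inE => /exists_inP[B BQ /exists_inP[u uB /exists_inP[v vB /andP[/eqP fE euv]]]].
rewrite fE !inE => /orP[/eqP xu|/eqP xv].
  rewrite xu (def_pblock tQ BQ uB); by exists v; split=> //; left.
rewrite xv (def_pblock tQ BQ vB); exists u; split=> //; first by right.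
by rewrite setUC.
Qed.

Lemma Fq_deg Q W : is_path_cover e W Q -> forall x, (#|[set f in Fq Q | x \in f]| <= 2)%N.
Proof.
case/andP=> pQ /forall_inP ipQ x.
have tQ : trivIset Q by case/and3P: pQ.
set B0 := pblock Q x; set s := tup B0; set ix := index x s.
apply: (@leq_trans #|[set [set x; nth x s ix.+1]; [set x; nth x s ix.-1]]|); last first.
  by rewrite cards2; case: (_ != _).
apply: subset_leq_card; apply/subsetP => f; rewrite inE => /andP[fF xf].
have [y [BQ xB yB exy fE]] := Fq_mem tQ fF xf.
have [U memE _ adj] := tupP (ipQ _ BQ).
have ys : y \in s by rewrite -memE.
have exy' : e x y || e y x by case: exy => ->; rewrite ?orbT.
move: exy'; rewrite !adj // -/B0 -/s -/ix => H.
have : (index y s == ix.+1) || (ix == (index y s).+1).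
  by move: H; case: (index y s == ix.+1); case: (ix == _).
case/orP=> [/eqP iy|/eqP iy].
  by rewrite fE !inE -iy nth_index // eqxx.
by rewrite fE !inE iy /= nth_index // eqxx orbT.
Qed.


Lemma Fq_count Q W : is_path_cover e W Q -> (#|W| <= #|Q| + #|Fq Q|)%N.
Proof.
case/andP=> pQ /forall_inP ipQ.
have tQ : trivIset Q by case/and3P: pQ.
have cW := cover_partition pQ.
have facts : forall x, x \in W -> [/\ pblock Q x \in Q, x \in pblock Q x & x \in tup (pblock Q x)].
  move=> x xW; have xc : x \in cover Q by rewrite cW.
  have BQ := pblock_mem xc; have xB : x \in pblock Q x by rewrite mem_pblock.
  by have [_ memE _ _] := tupP (ipQ _ BQ); rewrite -memE.
pose nx x := nth x (tup (pblock Q x)) (index x (tup (pblock Q x))).+1.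
pose L := [set x in W | (size (tup (pblock Q x)) <= (index x (tup (pblock Q x))).+1)%N].
rewrite -(cardsID L W); apply: leq_add.
-
  rewrite (_ : #|W :&: L| = #|pblock Q @: (W :&: L)|); last (rewrite card_in_imset //); last first.
    move=> x y; rewrite !inE => /and3P[xW _ xL] /and3P[yW _ yL] E.
    have [xQ xB xs] := facts x xW; have [yQ yB ys] := facts y yW.
    move: yL ys; rewrite -E => yL ys.
    have ixs : (index x (tup (pblock Q x)) < size (tup (pblock Q x)))%N by rewrite index_mem.
    have iys : (index y (tup (pblock Q x)) < size (tup (pblock Q x)))%N by rewrite index_mem.
    have ie : index x (tup (pblock Q x)) = index y (tup (pblock Q x)) by lia.
    by rewrite -(nth_index x xs) -(nth_index x ys) ie.
  apply: subset_leq_card; apply/subsetP => B /imsetP[x]; rewrite !inE => /and3P[xW _ _] ->.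
  by case: (facts x xW).
- rewrite (_ : #|W :\: L| = #|(fun x => [set x; nx x]) @: (W :\: L)|); last (rewrite card_in_imset //); last first.
    have key : forall x, x \in W -> x \notin L ->
        [/\ nx x \in W, pblock Q (nx x) = pblock Q x &
         index (nx x) (tup (pblock Q x)) = (index x (tup (pblock Q x))).+1].
      move=> x xW xL; have [xQ xB xs] := facts x xW.
      have [U memE _ _] := tupP (ipQ _ xQ).
      have lt : ((index x (tup (pblock Q x))).+1 < size (tup (pblock Q x)))%N.
        by move: xL; rewrite !inE xW /= -ltnNge.
      have nxs : nx x \in tup (pblock Q x) by apply: mem_nth.
      have nxB : nx x \in pblock Q x by rewrite memE.
      split.
      + by rewrite -cW; apply/bigcupP; exists (pblock Q x).
      + exact: def_pblock.
      + exact: index_uniq.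
    move=> x y; rewrite !in_setD => /andP[xL xW] /andP[yL yW] E.
    have [nxW nxP nxI] := key x xW xL; have [nyW nyP nyI] := key y yW yL.
    case: (eqVneq x y) => // xy.
    have : x \in [set y; nx y] by rewrite -E !inE eqxx.
    rewrite !inE (negbTE xy) /= => /eqP xe.
    have : y \in [set x; nx x] by rewrite E !inE eqxx.
    rewrite !inE eq_sym (negbTE xy) /= => /eqP ye.
    have : index x (tup (pblock Q x)) = (index x (tup (pblock Q x))).+2.
      have Pxy : pblock Q y = pblock Q x by rewrite ye nxP.
      by rewrite {1}xe -Pxy nyI Pxy ye nxI.
    by move/eqP; rewrite -[X in X == _]addn0 -addn2 eqn_add2l.
  apply: subset_leq_card; apply/subsetP => f /imsetP[x]; rewrite !in_setD => /andP[xL xW] ->.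
  have [xQ xB xs] := facts x xW.
  have [U memE _ adj] := tupP (ipQ _ xQ).
  have lt : ((index x (tup (pblock Q x))).+1 < size (tup (pblock Q x)))%N.
    by move: xL; rewrite !inE xW /= -ltnNge.
  have nxB : nx x \in pblock Q x by rewrite memE; apply: mem_nth.
  rewrite inE; apply/exists_inP; exists (pblock Q x) => //; apply/exists_inP; exists x => //.
  apply/exists_inP; exists (nx x) => //; rewrite eqxx /= adj //.
  by rewrite index_uniq // eqxx.
Qed.

End Cover.


Unset Implicit Arguments.

Theorem mainTheorem8 (R : realFieldType) (n : nat) (e : rel 'I_n)
    (A : 'M[R]_n) (c : nat) (Ts : 'I_c -> {set 'I_n}) :
  is_forest e ->
  in_RT e A ->
  (1 <= c)%N ->
  (forall i, is_subtree e (Ts i)) ->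
  (forall i j, i != j -> independent e (Ts i) (Ts j)) ->
  (forall i, principal_submx A (Ts i) \in unitmx) ->
  (nullity A <= path_cover_number e (~: \bigcup_(i < c) Ts i))%N.
Proof.
move=> [esym eirr nocyc] [pA _] _ _ ind inv.
set U := \bigcup_(i < c) Ts i.
have iU : invU U A := invU_union pA ind inv.
have WE : [set: 'I_n] :\: U = ~: U := setTD U.
have key : forall F, edgesIn e F (~: U) -> (forall x, #|[set f in F | x \in f]| <= 2)%N ->
    (nullity A + #|F| <= #|~: U|)%N.
  move=> F hF hd.
  have [Z [cZ hZ]] := @mainG _ _ _ esym eirr nocyc n setT U A F (leq_trans (max_card _) (eq_leq (card_ord n))) (subsetT U) pA iU (ltac:(by rewrite WE)) hd.
  rewrite WE in cZ; apply: leq_trans cZ; rewrite leq_add2r.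
  exact: nullity_le hZ.
rewrite /path_cover_number; apply: (big_ind (fun m => nullity A <= m)%N).
- have := key set0 (fun f => ltac:(by rewrite in_set0)).
  rewrite cards0 addn0; apply=> x.
  by apply: leq_trans (subset_leq_card (_ : _ \subset set0)) _; [apply/subsetP => f; rewrite !inE | rewrite cards0].
- by move=> a b ha hb; rewrite leq_min ha hb.
- move=> Q hQ; have pQ : partition Q (~: U) by case/andP: hQ.
  have := key (Fq e Q) (Fq_edges pQ) (Fq_deg hQ).
  have := Fq_count hQ.
  move=> h1 h2; rewrite -(leq_add2r #|Fq e Q|); exact: leq_trans h2 h1.
Qed.
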